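(* Let $l_1\le l_2\le\cdots\le l_k$ be nonnegative integers with $L=l_1+\cdots+l_k\ge1$. Write $h_{l_1}(z)\cdots h_{l_k}(z)=\sum_{p\ge0}c_p h_p(z)$. Then $|c_p|\le(2L)^{L-l_k}$ for every $p$.
   Context: $h_j$ denotes the $j$-th monic probabilists' Hermite polynomial: $h_0=1$, $h_1(z)=z$, $h_{j+1}(z)=zh_j(z)-jh_{j-1}(z)$; they are orthogonal under the standard Gaussian measure with $\mathbb E[h_p^2]=p!$. *)

(* Defs.v *)
From HB Require Import structures.
From mathcomp Require Import all_boot all_order all_algebra.
Set Implicit Arguments. Unset Strict Implicit. Unset Printing Implicit Defensive.
Import Order.TTheory GRing.Theory Num.Theory.
Local Open Scope ring_scope.

(* Monic probabilists' Hermite polynomials: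
   h_0 = 1, h_1 = X, h_{j+1} = X h_j - j h_{j-1}.
   herm_pair n = (h_n, h_{n+1}). *)
Fixpoint herm_pair (R : nzRingType) (n : nat) : {poly R} * {poly R} :=
  match n with
  | 0%N => (1, 'X)
  | m.+1 => let: (a, b) := herm_pair R m in (b, 'X * b - m.+1%:R *: a)
  end.

Definition herm (R : nzRingType) (n : nat) : {poly R} := (herm_pair R n).1.

(* Main.v *)
Require Import Defs.
From HB Require Import structures.
From mathcomp Require Import all_boot all_order all_algebra.
From mathcomp Require Import lra.
Import Order.TTheory GRing.Theory Num.Theory.
Local Open Scope ring_scope.
Set Implicit Arguments. Unset Strict Implicit.

Section H.
Variable R : realFieldType.

Lemma herm_pairE n : herm_pair R n = (herm R n, herm R n.+1).
Proof. rewrite /herm /=; by case: (herm_pair R n). Qed.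

Lemma herm0 : herm R 0 = 1. Proof. by []. Qed.
Lemma herm1 : herm R 1 = 'X. Proof. by []. Qed.

Lemma hermSS n : herm R n.+2 = 'X * herm R n.+1 - n.+1%:R *: herm R n.
Proof.
rewrite {1}/herm /= herm_pairE /=.
by [].
Qed.

Lemma XhermE p : 'X * herm R p = herm R p.+1 + p%:R *: herm R p.-1.
Proof.
case: p => [|n]; first by rewrite herm0 herm1 mulr1 scale0r addr0.
by rewrite hermSS /= subrK.
Qed.

Lemma herm_coef n : (herm R n)`_n = 1 /\ forall k, (n < k)%N -> (herm R n)`_k = 0.
Proof.
suff H : forall n, ((herm R n)`_n = 1 /\ forall k, (n < k)%N -> (herm R n)`_k = 0) /\
   ((herm R n.+1)`_n.+1 = 1 /\ forall k, (n.+1 < k)%N -> (herm R n.+1)`_k = 0).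
  by case: (H n).
clear n.
elim=> [|n [IH1 IH2]].
  rewrite herm0 herm1; split; split.
  - by rewrite coefC.
  - by move=> [|k] //; rewrite coefC.
  - by rewrite coefX.
  - by move=> [|[|k]] //; rewrite coefX.
split=> //.
rewrite hermSS; split.
- rewrite coefB coefXM coefZ /= (proj1 IH2) (proj2 IH1) ?mulr0 ?subr0 //.
- move=> k Hk; rewrite coefB coefXM coefZ.
  case: k Hk => [|k] // Hk /=.
  rewrite (proj2 IH2) // (proj2 IH1) ?mulr0 ?subr0 //.
  by apply: ltn_trans Hk.
Qed.

Lemma herm_indep K (d : nat -> R) :
  \sum_(p < K) d p *: herm R p = 0 -> forall p, (p < K)%N -> d p = 0.
Proof.
elim: K => [|K IH] // H.
rewrite big_ord_recr /= in H.
have dK : d K = 0.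
  have := congr1 (fun q : {poly R} => q`_K) H.
  rewrite coefD coef_sum coefZ (proj1 (herm_coef K)) mulr1 coef0.
  rewrite big1 ?add0r // => i _.
  by rewrite coefZ (proj2 (herm_coef i)) ?mulr0.
move: H; rewrite dK scale0r addr0 => H p.
rewrite ltnS leq_eqVlt => /orP [/eqP -> //| ]; exact: IH.
Qed.


Lemma sum_widen (V : zmodType) (F : nat -> V) D D' :
  (forall p, (D <= p)%N -> F p = 0) -> (D <= D')%N ->
  \sum_(p < D') F p = \sum_(p < D) F p.
Proof.
move=> HF; elim: D' => [|n IH].
  by rewrite leqn0 => /eqP ->.
rewrite leq_eqVlt => /orP [/eqP -> //|Hn].
by rewrite big_ord_recr /= HF // addr0 IH.
Qed.

Definition Rep (P : {poly R}) (D : nat) (M : R) :=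
  exists c : nat -> R, [/\ forall p, (D <= p)%N -> c p = 0,
     forall p, `|c p| <= M & P = \sum_(p < D) c p *: herm R p].

Lemma Rep_ge0 P D M : Rep P D M -> 0 <= M.
Proof. by case=> c [_ H _]; apply: le_trans (H 0%N). Qed.

Lemma Rep_widen P D M D' M' : Rep P D M -> (D <= D')%N -> M <= M' -> Rep P D' M'.
Proof.
case=> c [H1 H2 H3] HD HM; exists c; split.
- move=> p Hp; apply: H1; exact: leq_trans Hp.
- move=> p; exact: le_trans (H2 p) HM.
- rewrite H3 (@sum_widen _ (fun p => c p *: herm R p) D D') // => p Hp; by rewrite H1 // scale0r.
Qed.

Lemma Rep_herm q : Rep (herm R q) q.+1 1.
Proof.
exists (fun p => (p == q)%:R); split.
- by move=> p Hp; case: eqP Hp => // ->; rewrite ltnn.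
- by move=> p; case: eqP; rewrite ?normr1 ?normr0.
- rewrite big_ord_recr /= eqxx scale1r big1 ?add0r // => i _.
  have := ltn_ord i; case: eqP => [/= ->|]; by rewrite ?ltnn ?scale0r.
Qed.

Lemma Rep_sub P Q D M M' a : Rep P D M -> Rep Q D M' ->
  Rep (P - a *: Q) D (M + `|a| * M').
Proof.
case=> c [H1 H2 H3]; case=> c' [H1' H2' H3'].
exists (fun p => c p - a * c' p); split.
- by move=> p Hp; rewrite H1 // H1' // mulr0 subr0.
- move=> p; apply: le_trans (ler_normB _ _) _.
  by rewrite normrM lerD // ler_wpM2l.
- rewrite H3 H3' scaler_sumr -sumrB; apply: eq_bigr => i _.
  by rewrite scalerBl scalerA.
Qed.

Lemma Rep_X P D M : Rep P D M -> Rep ('X * P) D.+1 (D%:R * M).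
Proof.
move=> HR; have M0 := Rep_ge0 HR; case: HR => c [H1 H2 H3].
exists (fun p => (if p is q.+1 then c q else 0) + p.+1%:R * c p.+1); split.
- move=> [|p] // Hp; rewrite (H1 p) // (H1 p.+2) ?mulr0 ?addr0 //.
  by apply: leq_trans (ltnW Hp) _.
- move=> p; case: D H1 H2 H3 => [|n] H1 H2 H3.
    rewrite mul0r; case: p => [|p]; rewrite !H1 // ?mulr0 ?addr0 ?normr0 //.
  apply: le_trans (ler_normD _ _) _.
  have Ha : `|if p is q.+1 then c q else 0| <= M by case: p => [|p]; rewrite ?normr0.
  case: (ltnP p n) => Hp.
    rewrite normrM ger0_norm ?ler0n // [n.+1%:R]mulrSr mulrDl mul1r addrC.
    apply: lerD => //; apply: ler_pM => //; by rewrite ?ler_nat.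
  rewrite H1 ?ltnS // mulr0 normr0 addr0; apply: le_trans Ha _.
  by rewrite ler_peMl // ler1n.
- rewrite H3 mulr_sumr.
  under eq_bigr do rewrite -scalerAr XhermE scalerDr scalerA.
  rewrite big_split /=.
  under [X in _ = X]eq_bigr do rewrite scalerDl.
  rewrite big_split /=; congr (_ + _).
    by rewrite big_ord_recl /= scale0r add0r.
  have -> : \sum_(i < D.+1) (i.+1%:R * c i.+1) *: herm R i =
             \sum_(i < D) (i.+1%:R * c i.+1) *: herm R i.
    apply: (@sum_widen _ (fun i => (i.+1%:R * c i.+1) *: herm R i) D D.+1) => // p Hp; by rewrite (H1 p.+1 (leqW Hp)) mulr0 scale0r.
  have <- : \sum_(i < D.+1) (c i * i%:R) *: herm R i.-1 =
             \sum_(i < D) (c i * i%:R) *: herm R i.-1.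
    apply: (@sum_widen _ (fun i => (c i * i%:R) *: herm R i.-1) D D.+1) => // p Hp.
    by rewrite H1 // mul0r scale0r.
  rewrite big_ord_recl /= mulr0 scale0r add0r.
  by apply: eq_bigr => i _; rewrite mulrC.
Qed.


Lemma Rep_mulherm_aux T P D M j : (1 <= D)%N -> (D + j.+1 <= T.+1)%N -> Rep P D M ->
  Rep (P * herm R j) (D + j) (M * (2 * T)%:R ^+ j) /\
  Rep (P * herm R j.+1) (D + j.+1) (M * (2 * T)%:R ^+ j.+1).
Proof.
move=> D1 HT HR; have M0 := Rep_ge0 HR.
elim: j HT => [|j IH] HT.
  rewrite herm0 herm1 mulr1 addn0 expr0 mulr1 expr1; split => //.
  rewrite mulrC addn1; apply: Rep_widen (Rep_X HR) _ _ => //.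
  rewrite mulrC ler_wpM2l // ler_nat; rewrite addn1 ltnS in HT.
  by apply: leq_trans HT _; rewrite mul2n -addnn leq_addr.
have HT' : (D + j.+1 <= T.+1)%N by apply: leq_trans HT; rewrite leq_add2l.
have [A B] := IH HT'.
split => //.
have -> : P * herm R j.+2 = 'X * (P * herm R j.+1) - j.+1%:R *: (P * herm R j).
  by rewrite hermSS mulrBr mulrCA scalerAr.
have HX := Rep_X B.
have HA : Rep (P * herm R j) (D + j.+2) (M * (2 * T)%:R ^+ j).
  apply: Rep_widen A _ _ => //; by rewrite leq_add2l -addn2 leq_addr.
rewrite -addnS in HX.
have HS := @Rep_sub _ _ _ _ _ j.+1%:R HX HA.
apply: Rep_widen HS _ _ => //.
set X0 := M * (2 * T)%:R ^+ j.
have X00 : 0 <= X0 by rewrite /X0 mulr_ge0 // exprn_ge0.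
have Han : (D + j.+1 <= T)%N by rewrite -ltnS -addnS.
have Ha : (D + j.+1)%:R <= T%:R :> R by rewrite ler_nat.
have Hb : (j.+1)%:R <= T%:R :> R.
  by rewrite ler_nat; apply: leq_trans Han; rewrite leq_addl.
have -> : M * (2 * T)%:R ^+ j.+1 = X0 * (2 * T)%:R by rewrite /X0 exprSr mulrA.
have -> : M * (2 * T)%:R ^+ j.+2 = X0 * (2 * T)%:R ^+ 2 by rewrite /X0 -mulrA -exprD addn2.
rewrite ger0_norm // natrM.
have T1 : 1 <= T%:R :> R by apply: le_trans Hb; rewrite ler1n.
move: Ha Hb T1 X00; set a := (D + j.+1)%:R; set b := j.+1%:R; set t := T%:R => Ha Hb T1 X00.
have t0 : 0 <= t by apply: le_trans T1.
have h1 : 0 <= (t - a) * (X0 * (2 * t)) by rewrite mulr_ge0 ?subr_ge0 // mulr_ge0 // mulr_ge0.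
have h2 : 0 <= (t - b) * X0 by rewrite mulr_ge0 ?subr_ge0.
have h3 : 0 <= (t - 1) * (t * X0) by rewrite mulr_ge0 ?subr_ge0 // mulr_ge0.
nra.
Qed.

Lemma Rep_mulherm T P D M j : (1 <= D)%N -> (D + j <= T.+1)%N -> Rep P D M ->
  Rep (P * herm R j) (D + j) (M * (2 * T)%:R ^+ j).
Proof.
case: j => [|j] D1 HT HR.
  by rewrite herm0 mulr1 addn0 expr0 mulr1.
by case: (Rep_mulherm_aux (j := j) D1 HT HR).
Qed.

Lemma Rep_prod T s P D M : (1 <= D)%N -> (D + sumn s <= T.+1)%N -> Rep P D M ->
  Rep (P * \prod_(i <- s) herm R i) (D + sumn s) (M * (2 * T)%:R ^+ sumn s).
Proof.
elim: s P D M => [|x s IH] P D M D1 HT HR.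
  by rewrite big_nil mulr1 addn0 expr0 mulr1.
rewrite big_cons mulrA /= addnA exprD mulrA.
apply: IH; first by apply: leq_trans D1 (leq_addr _ _).
  by rewrite -addnA.
apply: Rep_mulherm => //; apply: leq_trans HT; by rewrite leq_add2l leq_addr.
Qed.

End H.

Unset Implicit Arguments. Set Strict Implicit.

Theorem proposition5p8 (R : realFieldType) (l : seq nat) :
  sorted leq l -> (1 <= sumn l)%N ->
  (exists (N : nat) (c : nat -> R),
      \prod_(i <- l) herm R i = \sum_(p < N) c p *: herm R p) /\
  (forall (N : nat) (c : nat -> R),
      \prod_(i <- l) herm R i = \sum_(p < N) c p *: herm R p ->
      forall p : nat, (p < N)%N ->
        `|c p| <= ((2 * sumn l) ^ (sumn l - last 0%N l))%:R).
Proof.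
move=> _ L1.
have key : Rep (\prod_(i <- l) herm R i) (sumn l).+1
              ((2 * sumn l)%:R ^+ (sumn l - last 0%N l)).
  case/lastP: l L1 => [|l' x] // L1.
  rewrite sumn_rcons last_rcons addnK -cats1 big_cat big_seq1 /=.
  rewrite mulrC.
  have := @Rep_prod R (sumn l' + x) l' (herm R x) x.+1 1 isT _ (Rep_herm R x).
  rewrite mul1r (addnC x.+1) addnS; by apply.
case: key => c [H1 H2 H3]; split; first by exists (sumn l).+1, c.
move=> N c' E p Hp.
set K := maxn N (sumn l).+1.
have HD : \sum_(q < K) ((if (q < N)%N then c' q else 0) - c q) *: herm R q = 0.
  under eq_bigr do rewrite scalerBl.
  rewrite sumrB.
  rewrite (@sum_widen _ (fun q => (if (q < N)%N then c' q else 0) *: herm R q) N K); last 2 first.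
  - by move=> q Hq; rewrite ltnNge Hq scale0r.
  - by rewrite leq_maxl.
  rewrite (@sum_widen _ (fun q => c q *: herm R q) (sumn l).+1 K); last 2 first.
  - by move=> q Hq; rewrite H1 // scale0r.
  - by rewrite leq_maxr.
  rewrite -H3.
  have -> : \sum_(q < N) (if (q < N)%N then c' q else 0) *: herm R q =
            \sum_(q < N) c' q *: herm R q by apply: eq_bigr => q _; rewrite ltn_ord.
  by rewrite -E subrr.
have := @herm_indep R K (fun q => (if (q < N)%N then c' q else 0) - c q) HD p (leq_trans Hp (leq_maxl _ _)).
rewrite Hp => /eqP; rewrite subr_eq0 => /eqP ->.
by rewrite natrX; apply: H2.
Qed.
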